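(* With the construction described in the context, for every fixed $\varepsilon>0$, as $N\to+\infty$, $$\frac{1}{\sum_{n\in\mathbb{N}}f(n)^2}\sum_{n\in\mathbb{N}}\frac{f(n)h(n)}{n^{\sigma}}\sum_{\substack{q\mid n\\ q\le n/N^{\varepsilon}}}f(q)q^{\sigma}=o(\mathcal{A}_N),$$ where the implied rate of convergence depends only on $\varepsilon$.
   Context: Notation: $\log_2 x=\log\log x$, $\log_3 x=\log\log\log x$. Fix $A>0$. Let $N$ be a large parameter and $\sigma=\frac12+\frac{A}{\log_2 N}$. Fix $\gamma\in(0,(e-1)^{-1})$. Let $\mathcal{P}$ be the set of primes $p$ with $e\log N\log_2 N<p\le \exp((\log_2 N)^{\gamma})\log N\log_2 N$. Let $f$ be the multiplicative function supported on squarefree integers (so $f(1)=1$) with $f(p)=\dfrac{(\log N)^{1-\sigma}(\log_2 N)^{\sigma}}{(\log_3 N)^{1-\sigma}}\cdot\dfrac{1}{p^{\sigma}(\log p-\log_2 N-\log_3 N)}$ for $p\in\mathcal{P}$ and $f(p)=0$ for primes $p\notin\mathcal{P}$. Let $h$ be the multiplicative function $h(n)=\prod_{p\mid n}\frac{p}{p+1}$ ($h(1)=1$). Define $$\mathcal{A}_N=\frac{1}{\sum_{n\in\mathbb{N}}f(n)^2}\sum_{n\in\mathbb{N}}\frac{f(n)h(n)}{n^{\sigma}}\sum_{q\mid n}f(q)q^{\sigma}=\prod_{p\in\mathcal{P}}\frac{1+f(p)^2h(p)+f(p)h(p)p^{-\sigma}}{1+f(p)^2}.$$ *)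

(* Defs.v *)
From mathcomp Require Import all_boot all_order all_algebra.
From mathcomp Require Import all_classical all_reals all_analysis.
Set Implicit Arguments. Unset Strict Implicit. Unset Printing Implicit Defensive.
Import Order.TTheory GRing.Theory Num.Theory.
Local Open Scope ring_scope.

Section Defs.
Variable R : realType.
Variables (A gam : R) (N : nat).

(* log N, log_2 N = log log N, log_3 N = log log log N *)
Definition L1 : R := ln (N%:R).
Definition L2 : R := ln L1.
Definition L3 : R := ln L2.

Definition sigma : R := 2^-1 + A / L2.

Definition Pupper : R := expR (L2 `^ gam) * L1 * L2.

Definition inP (p : nat) : bool :=
  [&& prime p, expR 1 * L1 * L2 < p%:R & p%:R <= Pupper].

Definition Pbound : nat := (Num.truncn Pupper).+1.

Definition fp (p : nat) : R :=
  (L1 `^ (1 - sigma) * L2 `^ sigma / L3 `^ (1 - sigma)) *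
  (1 / (p%:R `^ sigma * (ln p%:R - L2 - L3))).

Definition sqfree (n : nat) : bool := \prod_(p <- primes n) p == n.

Definition f (n : nat) : R :=
  if [&& 0 < n, sqfree n & all inP (primes n)]%N
  then \prod_(p <- primes n) fp p else 0.

Definition h (n : nat) : R := \prod_(p <- primes n) (p%:R / (p.+1)%:R).

(* product of all primes of P: every n with f n <> 0 divides it, hence
   the sums over n in N below are exactly sums over 1 <= n <= Mprod *)
Definition Mprod : nat := \prod_(p < Pbound | inP p) p.

Definition sum_f2 : R := \sum_(1 <= n < Mprod.+1) f n ^+ 2.

Definition calA : R :=
  sum_f2^-1 * \sum_(1 <= n < Mprod.+1)
     (f n * h n / n%:R `^ sigma *
      \sum_(q <- divisors n) f q * q%:R `^ sigma).

Definition calB (eps : R) : R :=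
  sum_f2^-1 * \sum_(1 <= n < Mprod.+1)
     (f n * h n / n%:R `^ sigma *
      \sum_(q <- divisors n | q%:R <= n%:R / N%:R `^ eps) f q * q%:R `^ sigma).

End Defs.

(* Main.v *)
Require Import Defs.
From mathcomp Require Import all_boot all_order all_algebra.
From mathcomp Require Import all_classical all_reals all_analysis.
From mathcomp Require Import ring lra.
Import Order.TTheory GRing.Theory Num.Theory.
Local Open Scope ring_scope.

Lemma logn_prod_primes p (s : seq nat) : all prime s ->
  logn p (\prod_(r <- s) r) = count_mem p s.
Proof.
elim: s => [|r s IH] /=; first by rewrite big_nil logn1.
move=> /andP[pr ps]; rewrite big_cons lognM ?(prime_gt0 pr) //; last first.
  by rewrite big_seq; apply: prodn_cond_gt0 => i /(allP ps) /prime_gt0.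
by rewrite IH // logn_prime // eq_sym.
Qed.

Lemma sqfree_logn n : sqfree n -> forall p, (logn p n <= 1)%N.
Proof.
move=> /eqP sq p; rewrite -sq logn_prod_primes ?all_prime_primes //.
by rewrite count_uniq_mem ?primes_uniq // leq_b1.
Qed.

Lemma logn_sqfree n : (0 < n)%N -> (forall p, logn p n <= 1)%N -> sqfree n.
Proof.
move=> n0 H; apply/eqP; rewrite {2}(prod_prime_decomp n0) prime_decompE big_map.
apply: eq_big_seq => p pn /=.
have : (0 < logn p n)%N by rewrite logn_gt0.
by have := H p; case: (logn p n) => [|[|k]] //= _ _; rewrite expn1.
Qed.

Definition supp {R : realType} (gam : R) N n :=
  [&& 0 < n, sqfree n & all (inP gam N) (primes n)]%N.

Lemma supp_dvd (R : realType) (gam : R) N n q :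
  supp gam N n -> (q %| n)%N -> supp gam N q.
Proof.
case/and3P=> n0 sq al qn.
have q0 : (0 < q)%N by apply: dvdn_gt0 qn.
apply/and3P; split => //.
  apply: logn_sqfree => //.
  move=> p; apply: leq_trans _ (sqfree_logn _ sq p).
  exact: dvdn_leq_log.
apply/allP => p; rewrite mem_primes => /and3P[pp _ pq]; apply: (allP al).
by rewrite mem_primes pp n0 (dvdn_trans pq qn).
Qed.

Lemma supp_perm (R : realType) (gam : R) N n q :
  supp gam N n -> (q %| n)%N ->
  perm_eq (primes n) (primes q ++ primes (n %/ q)).
Proof.
move=> sn qn; have /and3P[n0 sq _] := sn.
have q0 : (0 < q)%N by apply: dvdn_gt0 qn.
have m0 : (0 < n %/ q)%N by rewrite divn_gt0 // dvdn_leq.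
have en : n = (q * (n %/ q))%N by rewrite mulnC divnK.
apply: uniq_perm; first exact: primes_uniq.
  rewrite cat_uniq !primes_uniq andbT /=; apply/hasPn => p pm; apply/negP => pq.
  have := sqfree_logn _ sq p; rewrite {1}en lognM //.
  by rewrite -!logn_gt0 in pm pq; rewrite -(addn1 0) leqNgt; apply/negP/negPn;
     apply: (leq_add pq pm).
by move=> p; rewrite mem_cat {1}en primesM.
Qed.
Arguments supp_dvd {R gam N n q}.
Arguments supp_perm {R gam N n q}.
Arguments sqfree_logn {n}.

Lemma sum_sub_uniq (R : realType) (T : eqType) (u t : seq T) (G : T -> R) :
  uniq u -> {subset u <= t} -> uniq t -> (forall x, x \in t -> 0 <= G x) ->
  \sum_(x <- u) G x <= \sum_(x <- t) G x.
Proof.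
move=> uu sub ut G0.
rewrite (perm_big [seq x <- t | x \in u]); last first.
  apply: uniq_perm => //; first exact: filter_uniq.
  by move=> x; rewrite mem_filter; case xu: (x \in u) => //=; rewrite sub.
rewrite big_filter big_mkcond /= big_seq_cond [X in _ <= X]big_seq_cond.
apply: ler_sum => x /andP[xt _]; case: ifP => _ //; exact: G0.
Qed.

Section Main.
Variables (R : realType) (A gam : R) (N : nat).
Local Notation f := (f A gam N).
Local Notation fp := (fp A N).
Local Notation h := (h R).
Local Notation sigma := (sigma A N).
Local Notation supp := (supp gam N).
Local Notation M := (Mprod gam N).

Lemma fE n : f n = if supp n then \prod_(p <- primes n) fp p else 0.
Proof. by []. Qed.

Lemma f_mul n q : supp n -> (q %| n)%N -> f n = f q * f (n %/ q).
Proof.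
move=> sn qn; rewrite !fE sn (supp_dvd sn qn) (supp_dvd sn (dvdn_div qn)).
by rewrite (perm_big _ (supp_perm sn qn)) big_cat.
Qed.

Lemma h_mul n q : supp n -> (q %| n)%N -> h n = h q * h (n %/ q).
Proof.
by move=> sn qn; rewrite /Defs.h (perm_big _ (supp_perm sn qn)) big_cat.
Qed.

Lemma h_ge0 n : 0 <= h n.
Proof. by apply: prodr_ge0 => p _; apply: divr_ge0. Qed.

Lemma h_le1 n : h n <= 1.
Proof.
apply: prodr_ile1 => p _; rewrite divr_ge0 //= ler_pdivrMr ?ltr0n // mul1r.
by rewrite ler_nat.
Qed.

Hypothesis fp_ge0 : forall p, inP gam N p -> 0 <= fp p.

Lemma f_ge0 n : 0 <= f n.
Proof.
rewrite fE; case: ifP => // /and3P[_ _ al].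
by rewrite big_seq; apply: prodr_ge0 => p /(allP al); apply: fp_ge0.
Qed.


Definition gfun m := f m * h m / m%:R `^ sigma.

Lemma gfun_ge0 m : 0 <= gfun m.
Proof. by rewrite /gfun mulr_ge0 ?mulr_ge0 ?f_ge0 ?h_ge0 ?invr_ge0 ?powR_ge0. Qed.

Definition Ysum := \sum_(1 <= n < M.+1) f n ^+ 2 * h n.

Lemma Ysum_ge0 : 0 <= Ysum.
Proof. by apply: sumr_ge0 => n _; rewrite mulr_ge0 ?sqr_ge0 ?h_ge0. Qed.

Lemma XA_ge : Ysum <= \sum_(1 <= n < M.+1)
     (f n * h n / n%:R `^ sigma *
      \sum_(q <- divisors n) f q * q%:R `^ sigma).
Proof.
apply: ler_sum_nat => n /andP[n1 _].
have npos : 0 < n%:R `^ sigma :> R by apply: powR_gt0; rewrite ltr0n.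
have -> : f n ^+ 2 * h n = f n * h n / n%:R `^ sigma * (f n * n%:R `^ sigma).
  by field; rewrite gt_eqF.
rewrite ler_wpM2l ?mulr_ge0 ?f_ge0 ?h_ge0 ?invr_ge0 ?powR_ge0 //.
have := @sum_sub_uniq R _ [:: n] (divisors n) (fun q => f q * q%:R `^ sigma).
rewrite big_seq1; apply => //; last first.
  by move=> x _; rewrite mulr_ge0 ?f_ge0 ?powR_ge0.
  exact: divisors_uniq.
by move=> x; rewrite inE => /eqP ->; rewrite divisors_id.
Qed.

Lemma inner_reindex (G : nat -> R) q : (0 < q)%N -> (forall m, 0 <= G m) ->
  \sum_(1 <= n < M.+1) (if (q %| n)%N then G (n %/ q)%N else 0)
  <= \sum_(1 <= m < M.+1) G m.
Proof.
move=> q0 G0.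
rewrite -big_mkcond -big_filter -(big_map (fun n => (n %/ q)%N) xpredT G).
apply: sum_sub_uniq => //; last exact: iota_uniq.
  rewrite map_inj_in_uniq; first by rewrite filter_uniq // iota_uniq.
  move=> x y; rewrite !mem_filter => /andP[qx _] /andP[qy _] e.
  by rewrite -(divnK qx) -(divnK qy) e.
move=> m /mapP[n]; rewrite mem_filter mem_index_iota => /andP[qn /andP[n1 nM]] ->.
rewrite mem_index_iota divn_gt0 // dvdn_leq //=.
by apply: leq_ltn_trans nM; apply: leq_div.
Qed.

Variable eps : R.
Hypothesis N0 : (0 < N)%N.
Let T := N%:R `^ eps.
Definition Gfun m := if T <= m%:R then gfun m else 0.

Lemma Gfun_ge0 m : 0 <= Gfun m.
Proof. by rewrite /Gfun; case: ifP => // _; apply: gfun_ge0. Qed.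

Lemma XB_le : \sum_(1 <= n < M.+1)
     (f n * h n / n%:R `^ sigma *
      \sum_(q <- divisors n | q%:R <= n%:R / N%:R `^ eps) f q * q%:R `^ sigma)
  <= Ysum * \sum_(1 <= m < M.+1) Gfun m.
Proof.
have T0 : 0 < T by apply: powR_gt0; rewrite ltr0n.
have step1 : forall n, (1 <= n < M.+1)%N ->
  f n * h n / n%:R `^ sigma *
      (\sum_(q <- divisors n | q%:R <= n%:R / N%:R `^ eps) f q * q%:R `^ sigma)
  <= \sum_(1 <= q < M.+1) (if (q %| n)%N then f q ^+ 2 * h q * Gfun (n %/ q)%N else 0).
  move=> n /andP[n1 nM].
  rewrite mulr_sumr.
  apply: (@le_trans _ _ (\sum_(q <- divisors n) f q ^+ 2 * h q * Gfun (n %/ q)%N)).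
    rewrite big_mkcond /= big_seq [X in _ <= X]big_seq.
    apply: ler_sum => q qd.
    have qn : (q %| n)%N by rewrite dvdn_divisors.
    have q0 : (0 < q)%N by apply: dvdn_gt0 qn.
    have m0 : (0 < n %/ q)%N by rewrite divn_gt0 // dvdn_leq.
    have KG : 0 <= f q ^+ 2 * h q * Gfun (n %/ q)%N.
      by apply: mulr_ge0; [apply: mulr_ge0; [exact: sqr_ge0 | exact: h_ge0] | exact: Gfun_ge0].
    case: ifP => c //.
    case sn : (supp n); last by rewrite fE sn !mul0r.
    have qpos : 0 < q%:R `^ sigma :> R by apply: powR_gt0; rewrite ltr0n.
    have mpos : 0 < (n %/ q)%:R `^ sigma :> R by apply: powR_gt0; rewrite ltr0n.
    have en : n%:R = q%:R * (n %/ q)%:R :> R by rewrite -natrM mulnC divnK.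
    rewrite /Gfun ifT; last first.
      rewrite natf_div // ler_pdivlMr ?ltr0n //.
      by rewrite ler_pdivlMr // in c; rewrite mulrC.
    rewrite (f_mul _ _ sn qn) (h_mul _ _ sn qn) en powRM // /gfun.
    rewrite le_eqVlt; apply/orP; left; apply/eqP; field.
    by rewrite !gt_eqF.
  rewrite -big_mkcond -big_filter; rewrite le_eqVlt; apply/orP; left; apply/eqP; apply: perm_big.
  apply: uniq_perm; first exact: divisors_uniq.
    by rewrite filter_uniq // iota_uniq.
  move=> d; rewrite mem_filter mem_index_iota -dvdn_divisors //.
  case dn: (d %| n)%N => //=.
  rewrite (dvdn_gt0 n1 dn) /=; apply/esym; apply: leq_ltn_trans nM; exact: dvdn_leq.
apply: le_trans (ler_sum_nat step1) _.
rewrite exchange_big /= /Ysum mulr_suml.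
apply: ler_sum_nat => q /andP[q1 _].
have -> : \sum_(1 <= i < M.+1)
   (if (q %| i)%N then f q ^+ 2 * h q * Gfun (i %/ q)%N else 0) =
   f q ^+ 2 * h q * \sum_(1 <= i < M.+1) (if (q %| i)%N then Gfun (i %/ q)%N else 0).
  by rewrite mulr_sumr; apply: eq_bigr => i _; case: ifP; rewrite ?mulr0.
rewrite ler_wpM2l ?mulr_ge0 ?sqr_ge0 ?h_ge0 //; last first.
  exact: (@inner_reindex Gfun q q1 Gfun_ge0).
all: exact: f_ge0.
Qed.


Lemma powR_prod (I : Type) (r : seq I) (F : I -> R) (x : R) :
  (forall i, 0 <= F i) -> (\prod_(i <- r) F i) `^ x = \prod_(i <- r) F i `^ x.
Proof.
move=> F0; elim: r => [|i r IH]; first by rewrite !big_nil powR1.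
by rewrite !big_cons powRM ?IH //; apply: prodr_ge0.
Qed.

Lemma inP_lt p : inP gam N p -> (p < Pbound gam N)%N.
Proof.
case/and3P=> _ _ pP; rewrite /Pbound ltnS truncn_ge_nat //.
exact: le_trans (ler0n _ _) pP.
Qed.

Variable alpha : R.
Hypothesis alpha0 : 0 <= alpha.

Definition Hp p := fp p * p%:R `^ alpha / p%:R `^ sigma.
Definition Hq (i : 'I_(Pbound gam N)) := if inP gam N i then Hp i else 0.
Definition Phi m := if supp m then \prod_(p <- primes m) Hp p else 0.

Lemma Hp_ge0 p : inP gam N p -> 0 <= Hp p.
Proof. by move=> pP; apply: mulr_ge0; [apply: mulr_ge0; [exact: fp_ge0 | exact: powR_ge0] | rewrite invr_ge0; exact: powR_ge0]. Qed.

Lemma Hq_ge0 i : 0 <= Hq i.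
Proof. by rewrite /Hq; case: ifP => // /Hp_ge0. Qed.

Lemma Phi_ge0 m : 0 <= Phi m.
Proof.
rewrite /Phi; case: ifP => // /and3P[_ _ al].
by rewrite big_seq; apply: prodr_ge0 => p /(allP al); apply: Hp_ge0.
Qed.

Lemma Gfun_le m : Gfun m <= Phi m / T `^ alpha.
Proof.
have T0 : 0 < T by apply: powR_gt0; rewrite ltr0n.
have Ta0 : 0 < T `^ alpha by apply: powR_gt0.
rewrite /Gfun; case: ifP => Tm; last by rewrite divr_ge0 ?Phi_ge0 ?powR_ge0.
rewrite /gfun /Phi; case sm: (supp m); last by rewrite fE sm !mul0r.
have /and3P[m0 sq _] := sm.
have mpos : 0 < m%:R `^ sigma :> R by apply: powR_gt0; rewrite ltr0n.
have ma : T `^ alpha <= m%:R `^ alpha.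
  by apply: ge0_ler_powR => //; rewrite nnegrE ?ler0n // ltW.
have fm0 : 0 <= f m by apply: f_ge0.
apply: (@le_trans _ _ (f m / m%:R `^ sigma)).
  rewrite ler_wpM2r ?invr_ge0 ?powR_ge0 //.
  by rewrite -[X in _ <= X]mulr1; apply: ler_wpM2l => //; apply: h_le1.
apply: (@le_trans _ _ (f m / m%:R `^ sigma * (m%:R `^ alpha / T `^ alpha))).
  rewrite -[X in X <= _]mulr1; apply: ler_wpM2l; first by rewrite divr_ge0 ?powR_ge0.
  by rewrite ler_pdivlMr // mul1r.
have em : m%:R = \prod_(p <- primes m) p%:R :> R by rewrite -natr_prod (eqP sq).
rewrite mulrA le_eqVlt; apply/orP; left; apply/eqP; congr (_ / _); rewrite em !powR_prod ?ler0n // fE sm.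
transitivity ((\prod_(p <- primes m) fp p) * (\prod_(p <- primes m) p%:R `^ alpha)
   * (\prod_(p <- primes m) p%:R `^ sigma)^-1); last by rewrite -prodfV -!big_split.
have : 0 < \prod_(p <- primes m) p%:R `^ sigma :> R by rewrite -powR_prod ?ler0n // -em.
move=> pp; field; by rewrite gt_eqF.
Qed.


Definition Sset m : {set 'I_(Pbound gam N)} := [set i | val i \in primes m].
Definition Psi (J : {set 'I_(Pbound gam N)}) :=
  \prod_(i < Pbound gam N) (if i \in J then Hq i else 1).

Lemma Psi_ge0 J : 0 <= Psi J.
Proof. by apply: prodr_ge0 => i _; case: ifP => // _; apply: Hq_ge0. Qed.

Lemma Phi_Psi m : supp m -> \prod_(p <- primes m) Hp p = Psi (Sset m).
Proof.
case/and3P => m0 sq al.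
rewrite /Psi -big_mkcond /=.
transitivity (\prod_(i < Pbound gam N | val i \in primes m) Hp i); last first.
  apply: eq_big => i; first by rewrite inE.
  by move=> ip; rewrite /Hq ifT //; exact: (allP al).
rewrite -(big_mkord (fun i => i \in primes m) Hp) -[in RHS]big_filter.
apply: perm_big; apply: uniq_perm; first exact: primes_uniq.
  by rewrite filter_uniq // iota_uniq.
move=> p; rewrite mem_filter mem_index_iota /=.
case pm: (p \in primes m) => //=.
by apply/esym; apply: inP_lt; apply: (allP al).
Qed.

Lemma Sset_inj m1 m2 : supp m1 -> supp m2 -> Sset m1 = Sset m2 -> m1 = m2.
Proof.
move=> s1 s2 e.
have key : forall a b, supp a -> Sset a = Sset b -> {subset primes a <= primes b}.
  move=> a b /and3P[_ _ al] eab p pa.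
  have plt := inP_lt _ (allP al p pa).
  have : Ordinal plt \in Sset a by rewrite inE.
  by rewrite eab inE.
have ep : primes m1 = primes m2.
  apply: (irr_sorted_eq ltn_trans ltnn (sorted_primes _) (sorted_primes _)).
  move=> p; apply/idP/idP; [exact: key | exact: key s2 (esym e) p].
case/and3P: s1 => _ /eqP e1 _; case/and3P: s2 => _ /eqP e2 _.
by rewrite -e1 -e2 ep.
Qed.

Lemma Phi_sum : \sum_(1 <= m < M.+1) Phi m <= \prod_(i < Pbound gam N) (1 + Hq i).
Proof.
rewrite /Phi -big_mkcond -big_filter.
rewrite (eq_big_seq (fun m => Psi (Sset m))); last first.
  by move=> m; rewrite mem_filter => /andP[sm _]; apply: Phi_Psi.
rewrite -(big_map Sset xpredT Psi).
apply: (@le_trans _ _ (\sum_(J : {set 'I_(Pbound gam N)}) Psi J)).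
  apply: sum_sub_uniq.
  - rewrite map_inj_in_uniq ?filter_uniq ?iota_uniq //.
    by move=> a b; rewrite !mem_filter => /andP[sa _] /andP[sb _]; apply: Sset_inj.
  - by move=> J _; apply: mem_index_enum.
  - exact: index_enum_uniq.
  - by move=> J _; apply: Psi_ge0.
have -> : \prod_(i < Pbound gam N) (1 + Hq i) = \prod_(i < Pbound gam N) (Hq i + 1) by apply: eq_bigr => i _; rewrite addrC.
rewrite bigA_distr le_eqVlt; apply/orP; left; apply/eqP.
by apply: eq_bigl => J; rewrite inE.
Qed.

Lemma prod_exp : \prod_(i < Pbound gam N) (1 + Hq i) <= expR (\sum_(i < Pbound gam N) Hq i).
Proof.
rewrite expR_sum; apply: ler_prod => i _; apply/andP; split.
  by rewrite addr_ge0 ?Hq_ge0.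
exact: expR_ge1Dx.
Qed.

Lemma Rankin : \sum_(1 <= m < M.+1) Gfun m <=
   expR (\sum_(i < Pbound gam N) Hq i) / T `^ alpha.
Proof.
apply: le_trans (ler_sum_nat (fun m _ => Gfun_le m)) _.
rewrite -mulr_suml; apply: ler_wpM2r; first by rewrite invr_ge0 powR_ge0.
exact: le_trans Phi_sum prod_exp.
Qed.

End Main.

Lemma poly_step (R : realType) (u E eps K : R) :
  1 <= u -> 1 <= E -> u ^+ 3 / 384 <= E -> 0 < eps -> 0 <= K ->
  2304 <= eps * u -> 2304 * K <= eps * u ->
  (E ^+ 3 * u + K) * (3 * u) <= eps * E ^+ 4.
Proof.
move=> u1 E1 hE e0 K0 h1 h2.
have h3 : 6 * u ^+ 2 <= eps * E.
  have : eps * (u ^+ 3 / 384) <= eps * E by rewrite ler_wpM2l // ltW.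
  apply: le_trans.
  have -> : eps * (u ^+ 3 / 384) = (eps * u) * u ^+ 2 / 384 by rewrite exprS; field.
  rewrite ler_pdivlMr //.
  have : 2304 * u ^+ 2 <= eps * u * u ^+ 2 by rewrite ler_wpM2r ?sqr_ge0.
  lra.
have h4 : 3 * u ^+ 2 * E ^+ 3 <= eps * E ^+ 4 / 2.
  have : 6 * u ^+ 2 * E ^+ 3 <= eps * E * E ^+ 3 by rewrite ler_wpM2r ?exprn_ge0 // (le_trans _ E1).
  have -> : eps * E * E ^+ 3 = eps * E ^+ 4 by rewrite -mulrA -exprS.
  lra.
have h5 : u ^+ 2 / 384 <= E ^+ 4.
  have : u ^+ 2 <= u ^+ 3 by apply: ler_weXn2l.
  have : E <= E ^+ 4 by apply: ler_eXnr.
  lra.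
have h6 : 3 * u * K <= eps * E ^+ 4 / 2.
  have : eps * (u ^+ 2 / 384) <= eps * E ^+ 4 by rewrite ler_wpM2l // ltW.
  have : 2304 * K * u <= eps * u * u by rewrite ler_wpM2r // (le_trans _ u1).
  rewrite expr2. lra.
have -> : (E ^+ 3 * u + K) * (3 * u) = 3 * u ^+ 2 * E ^+ 3 + 3 * u * K by ring.
lra.
Qed.


Lemma asym (R : realType) (gam eps K : R) : 0 < gam -> gam < 1 -> 0 < eps -> 0 <= K ->
  exists U : R, 1 <= U /\ forall u, U <= u ->
    expR (u `^ gam + u / 2) * u + K <= eps * expR u / (u `^ gam + u + ln u).
Proof.
move=> g0 g1 e0 K0.
pose U1 := (4 : R) `^ (1 - gam)^-1.
have U10 : 0 <= U1 by apply: powR_ge0.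
exists (1 + U1 + 2304 / eps + 2304 * K / eps).
have d1 : 0 <= 2304 / eps by apply: divr_ge0; [exact: ler0n | exact: ltW].
have d2 : 0 <= 2304 * K / eps by apply: divr_ge0; [apply: mulr_ge0; [exact: ler0n | exact: K0] | exact: ltW].
split; first lra.
move=> u hu.
have u1 : 1 <= u by lra.
have u0 : 0 < u by lra.
have hU1 : U1 <= u by lra.
have hg : u `^ gam * 4 <= u.
  have h4 : 4 <= u `^ (1 - gam).
    have -> : (4 : R) = U1 `^ (1 - gam).
      rewrite /U1 -powRrM mulVf; first by rewrite powRr1 ?ler0n.
      by rewrite subr_eq0 gt_eqF.
    apply: ge0_ler_powR; [by rewrite subr_ge0 ltW | by rewrite nnegrE | by rewrite nnegrE ltW | exact: hU1].
  have eu : u = u `^ gam * u `^ (1 - gam).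
    rewrite -powRD; first by rewrite addrC subrK powRr1 ?(ltW u0).
    by rewrite (gt_eqF u0) implybT.
  by rewrite [X in _ <= X]eu ler_wpM2l ?powR_ge0.
have ug0 : 0 <= u `^ gam by apply: powR_ge0.
have lnu : ln u < u by apply: ln_sublinear.
have lnu0 : 0 <= ln u by apply: ln_ge0.
pose D := u `^ gam + u + ln u.
have D0 : 0 < D by rewrite /D; lra.
have D3 : D <= 3 * u by rewrite /D; lra.
pose E := expR (u / 4).
have E1 : 1 <= E by apply: (@le_trans _ _ (1 + u / 4)); [lra | exact: expR_ge1Dx].
have hE : u ^+ 3 / 384 <= E.
  have u40 : 0 <= u / 4 by lra.
  have := @expR_ge1Dxn R (u / 4) 2 u40.
  have -> : (u / 4) ^+ 3 / (3`!)%:R = u ^+ 3 / 384 :> R.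
    have -> : (3`!)%:R = 6%:R :> R by []. by rewrite expr_div_n; field.
  rewrite -/E; lra.
have eE4 : expR u = E ^+ 4 by rewrite /E -expRM_natl; congr expR; field.
have eE3 : expR (u `^ gam + u / 2) <= E ^+ 3.
  by rewrite /E -expRM_natl ler_expR; lra.
have h1 : 2304 <= eps * u.
  have : eps * (2304 / eps) <= eps * u by apply: ler_wpM2l; [exact: ltW | lra].
  by rewrite mulrC divfK ?gt_eqF.
have h2 : 2304 * K <= eps * u.
  have : eps * (2304 * K / eps) <= eps * u by apply: ler_wpM2l; [exact: ltW | lra].
  by rewrite mulrC divfK ?gt_eqF.
have P := @poly_step R u E eps K u1 E1 hE e0 K0 h1 h2.
rewrite eE4 ler_pdivlMr; last exact: D0.
apply: le_trans P.
have E30 : 0 <= E ^+ 3 by apply: exprn_ge0; apply: le_trans E1; exact: ler01.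
apply: (@le_trans _ _ ((E ^+ 3 * u + K) * D)).
  apply: ler_wpM2r; first exact: ltW.
  rewrite lerD2r; apply: ler_wpM2r; [exact: ltW | exact: eE3].
apply: ler_wpM2l; last exact: D3.
  by apply: addr_ge0; [apply: mulr_ge0; [exact: E30 | exact: ltW] | exact: K0].
Qed.

Section Analytic.
Variables (R : realType) (A gam : R) (N : nat).
Hypotheses (A0 : 0 < A) (g0 : 0 < gam).
Hypothesis hu : expR 1 + 2 * A <= L2 R N.

Local Notation u := (L2 R N).
Local Notation C := (L1 R N `^ (1 - sigma A N) * L2 R N `^ sigma A N / L3 R N `^ (1 - sigma A N)).

Lemma e_ge1 : 1 <= expR 1 :> R.
Proof. have hu2 := hu; have A2 := A0.
 have := expR_ge1Dx (1:R); lra. Qed.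

Lemma u_ge1 : 1 <= u.
Proof. have hu2 := hu; have A2 := A0.
 have H := e_ge1. lra. Qed.

Lemma u_gee : expR 1 <= u.
Proof. have hu2 := hu; have A2 := A0.
 lra. Qed.

Lemma L1_gt1 : 1 < L1 R N.
Proof. have hu2 := hu; have A2 := A0.

rewrite ltNge; apply/negP => /ln_le0 h.
have := u_ge1; rewrite /L2; lra.
Qed.

Lemma eL1 : L1 R N = expR u.
Proof. have hu2 := hu; have A2 := A0.
 by rewrite /L2 lnK // posrE (lt_trans ltr01 L1_gt1). Qed.

Lemma L3_ge1 : 1 <= L3 R N.
Proof. have hu2 := hu; have A2 := A0.

rewrite /L3 -[X in X <= _](expRK 1) ler_ln ?posrE ?expR_gt0 ?u_gee //.
exact: lt_le_trans ltr01 u_ge1.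
Qed.

Lemma sig_ge : 2^-1 <= sigma A N.
Proof. have hu2 := hu; have A2 := A0.

rewrite /sigma; have : 0 <= A / u by rewrite divr_ge0 ?ltW // (lt_le_trans ltr01 u_ge1).
lra.
Qed.

Lemma sig_le : sigma A N <= 1.
Proof. have hu2 := hu; have A2 := A0.

rewrite /sigma.
have u0 : 0 < u := lt_le_trans ltr01 u_ge1.
have : A / u <= 2^-1.
  rewrite ler_pdivrMr //; have := e_ge1; lra.
lra.
Qed.

Lemma C_le : C <= L1 R N `^ 2^-1 * u.
Proof. have hu2 := hu; have A2 := A0.

have s1 := sig_ge; have s2 := sig_le.
have L11 : 1 <= L1 R N := ltW L1_gt1.
have h1 : L1 R N `^ (1 - sigma A N) <= L1 R N `^ 2^-1 by apply: ler_powR => //; lra.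
have h2 : L2 R N `^ sigma A N <= u by apply: ler1_powR => //; exact: u_ge1.
have h3 : 1 <= L3 R N `^ (1 - sigma A N).
  have h := @ler_powR R (L3 R N) L3_ge1 0 (1 - sigma A N); rewrite powRr0 in h; apply: h; lra.
apply: (@le_trans _ _ (L1 R N `^ (1 - sigma A N) * L2 R N `^ sigma A N)).
  rewrite ler_pdivrMr ?(lt_le_trans ltr01 h3) //.
  by rewrite -[X in X <= _]mulr1 ler_wpM2l ?mulr_ge0 ?powR_ge0.
by apply: ler_pM => //; apply: powR_ge0.
Qed.


Local Notation Pup := (Pupper gam N).

Lemma u_gt0 : 0 < u.
Proof. exact: lt_le_trans ltr01 u_ge1. Qed.

Lemma L1_gt0 : 0 < L1 R N.
Proof. exact: lt_trans ltr01 L1_gt1. Qed.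

Lemma lnPup : ln Pup = u `^ gam + u + L3 R N.
Proof.
rewrite /Pupper !lnM ?posrE ?expR_gt0 ?L1_gt0 ?u_gt0 ?mulr_gt0 //.
by rewrite expRK. exact: L1_gt0.
Qed.

Lemma lnPup_gt0 : 0 < ln Pup.
Proof.
rewrite lnPup; have := L3_ge1; have := u_ge1; have := powR_ge0 u gam; lra.
Qed.

Lemma Pup_gt0 : 0 < Pup.
Proof. by rewrite /Pupper !mulr_gt0 ?expR_gt0 ?L1_gt0 ?u_gt0. Qed.

Lemma inP_D p : inP gam N p -> 1 <= ln p%:R - u - L3 R N.
Proof.
case/and3P => _ lo _.
have e0 : 0 < expR 1 * L1 R N * u by rewrite !mulr_gt0 ?expR_gt0 ?L1_gt0 ?u_gt0.
have : ln (expR 1 * L1 R N * u) <= ln p%:R.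
  by rewrite ler_ln ?posrE ?(lt_trans e0 lo) // ltW.
rewrite !lnM ?posrE ?expR_gt0 ?L1_gt0 ?u_gt0 ?mulr_gt0 //.
move=> h; have e1 := @expRK R 1. rewrite e1 in h.
rewrite /L3 /L2; lra.
exact: L1_gt0.
Qed.

Lemma C_ge0 : 0 <= C.
Proof. by rewrite divr_ge0 ?mulr_ge0 ?powR_ge0. Qed.

Lemma fp_ge0' p : inP gam N p -> 0 <= fp A N p.
Proof.
move=> /inP_D D1; rewrite /fp mulr_ge0 ?C_ge0 // divr_ge0 ?ler01 // mulr_ge0 ?powR_ge0 //.
lra.
Qed.

Let alpha := (ln Pup)^-1.

Lemma alpha_ge0 : 0 <= alpha.
Proof. by rewrite /alpha invr_ge0 ltW // lnPup_gt0. Qed.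

Lemma Hq_le i : Hq R A gam N alpha i <= L1 R N `^ 2^-1 / L1 R N.
Proof.
have L10 := L1_gt0.
rewrite /Hq; case: ifP => pP; last by rewrite divr_ge0 ?powR_ge0 // ltW.
set p := nat_of_ord i.
have D1 := inP_D _ pP.
have /and3P[pr lo hi] := pP.
have p1 : 1 <= p%:R :> R by rewrite ler1n prime_gt0.
have p0 : 0 < p%:R :> R by lra.
set a := p%:R `^ sigma A N.
have a0 : 0 < a by apply: powR_gt0.
set b := p%:R `^ alpha.
have b0 : 0 <= b by apply: powR_ge0.
have be : b <= expR 1.
  rewrite /b /powR gt_eqF // ler_expR /alpha.
  rewrite mulrC ler_pdivrMr; last exact: lnPup_gt0.
  rewrite mul1r ler_ln ?posrE //; exact: Pup_gt0.
have aa : p%:R <= a * a.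
  rewrite /a -powRD; last by rewrite (gt_eqF p0) implybT.
  apply: le1r_powR => //; have := sig_ge; lra.
set D := ln p%:R - u - L3 R N.
have D0 : 0 < D by rewrite /D; lra.
have D1' : 1 <= D by rewrite /D; lra.
have eH : Hp R A N alpha p = C * b / (a * a * D).
  rewrite /Hp /fp -/a -/b -/D; field.
  have L3p : 0 < L3 R N `^ (1 - sigma A N) by apply: powR_gt0; have := L3_ge1; lra.
  by rewrite !gt_eqF.
rewrite eH.
have C0 := C_ge0.
have pL : expR 1 * L1 R N * u < p%:R := lo.
have e0 : 0 < expR 1 :> R by apply: expR_gt0.
have pos1 : 0 < expR 1 * L1 R N * u by rewrite !mulr_gt0 // u_gt0.
apply: (@le_trans _ _ (C * expR 1 / p%:R)).
  rewrite ler_pdivrMr; last by rewrite !mulr_gt0.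
  set X := C * expR 1 / p%:R.
  have X0 : 0 <= X by rewrite /X; apply: divr_ge0; [apply: mulr_ge0 | apply: ltW].
  have Xp : X * p%:R = C * expR 1 by rewrite /X divfK // gt_eqF.
  have s1 : p%:R <= a * a * D.
    apply: le_trans aa _; rewrite -[X in X <= _]mulr1; apply: ler_wpM2l => //.
    by apply: mulr_ge0; apply: ltW.
  nra.
apply: (@le_trans _ _ (C * expR 1 / (expR 1 * L1 R N * u))).
  apply: ler_wpM2l; first by apply: mulr_ge0 => //; apply: ltW.
  rewrite lef_pV2 ?posrE; [exact: ltW | exact: p0 | exact: pos1].
have -> : C * expR 1 / (expR 1 * L1 R N * u) = C / (L1 R N * u).
  have L3p : 0 < L3 R N `^ (1 - sigma A N) by apply: powR_gt0; have := L3_ge1; lra.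
  by field; rewrite (gt_eqF e0) (gt_eqF L10) (gt_eqF u_gt0) (gt_eqF L3p).
apply: (@le_trans _ _ (L1 R N `^ 2^-1 * u / (L1 R N * u))).
  apply: ler_wpM2r; last exact: C_le.
  by rewrite invr_ge0; apply: mulr_ge0; apply: ltW => //; apply: u_gt0.
rewrite le_eqVlt; apply/orP; left; apply/eqP; field.
by rewrite (gt_eqF L10) (gt_eqF u_gt0).
Qed.


Lemma sumHq_le : \sum_(i < Pbound gam N) Hq R A gam N alpha i <= expR (u `^ gam + u / 2) * u + 1.
Proof.
have L10 := L1_gt0.
apply: (@le_trans _ _ (\sum_(i < Pbound gam N) (L1 R N `^ 2^-1 / L1 R N))).
  by apply: ler_sum => i _; apply: Hq_le.
set B := L1 R N `^ 2^-1 / L1 R N.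
rewrite sumr_const card_ord -(mulr_natl B).
have B0 : 0 <= B by rewrite /B divr_ge0 ?powR_ge0 // ltW.
have B1 : B <= 1.
  rewrite /B ler_pdivrMr // mul1r; apply: ler1_powR; [exact: ltW L1_gt1 | ].
  have : (0 : R) < 2 by [].
  move=> h2; rewrite invr_le1 //; [exact: ler1n | ].
  by rewrite unitfE gt_eqF.
have hPb : (Pbound gam N)%:R <= Pup + 1.
  rewrite /Pbound -addn1 natrD lerD2r truncn_le; exact: ltW Pup_gt0.
have hP : Pup * B = expR (u `^ gam + u / 2) * u.
  rewrite /B /Pupper eL1 -expRM expRD; field.
  by rewrite gt_eqF ?expR_gt0.
apply: (@le_trans _ _ ((Pup + 1) * B)); last first.
  rewrite mulrDl mul1r hP; lra.
nra.
Qed.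

Lemma Gamma_le eps delta : 0 < eps -> 0 < delta -> (0 < N)%N ->
  expR (u `^ gam + u / 2) * u + (1 + `|ln delta|) <= eps * expR u / (u `^ gam + u + ln u) ->
  \sum_(1 <= m < (Mprod gam N).+1) Gfun R A gam N eps m <= delta.
Proof.
move=> e0 d0 N0 H.
apply: le_trans (Rankin R A gam N fp_ge0' eps N0 alpha alpha_ge0) _.
have N0' : 0 < N%:R :> R by rewrite ltr0n.
have -> : (N%:R `^ eps) `^ alpha = expR (eps * L1 R N * alpha).
  have e1 : N%:R `^ eps = expR (eps * L1 R N) by rewrite /powR (gt_eqF N0').
  by rewrite e1 -expRM.
rewrite -expRB -[X in _ <= X](lnK d0) ler_expR.
have hS := sumHq_le.
have -> : eps * L1 R N * alpha = eps * expR u / (u `^ gam + u + ln u).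
  by rewrite eL1 /alpha lnPup.
have := ler_norm (- ln delta); rewrite normrN.
lra.
Qed.

End Analytic.

Theorem proposition3p3 (R : realType) (A gam eps : R) :
  0 < A -> 0 < gam -> gam < (expR 1 - 1)^-1 -> 0 < eps ->
  forall delta : R, 0 < delta ->
  exists N0 : nat, forall N : nat, (N0 <= N)%N ->
    `|calB A gam N eps| <= delta * calA A gam N.
Proof.
move=> A0 g0 g1 e0 delta d0.
have e2 : 2 <= expR 1 :> R by have := expR_ge1Dx (1 : R); lra.
have g1' : gam < 1.
  apply: lt_le_trans g1 _; rewrite invr_le1; first lra.
    by rewrite unitfE; apply/eqP; lra.
  lra.
have K0 : 0 <= 1 + `|ln delta| by have := normr_ge0 (ln delta); lra.
have [U [U1 HU]] := @asym R gam eps (1 + `|ln delta|) g0 g1' e0 K0.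
pose U' := U + expR 1 + 2 * A.
exists (Num.truncn (expR (expR U'))).+1.
move=> N hN.
have N0 : (0 < N)%N by apply: leq_trans hN.
have hNr : expR (expR U') < N%:R.
  apply: (@lt_le_trans _ _ (Num.truncn (expR (expR U'))).+1%:R); last by rewrite ler_nat.
  by rewrite -truncn_le_nat.
have hL1 : expR U' <= L1 R N.
  rewrite /L1 -[X in X <= _](expRK (expR U')) ler_ln ?posrE ?expR_gt0 //; first exact: ltW.
  exact: lt_trans (expR_gt0 _) hNr.
have hL2 : U' <= L2 R N.
  rewrite /L2 -[X in X <= _](expRK U') ler_ln ?posrE ?expR_gt0 //.
  exact: lt_le_trans (expR_gt0 _) hL1.
have eg0 : 0 < expR 1 :> R by apply: expR_gt0.
have hu : expR 1 + 2 * A <= L2 R N by rewrite /U' in hL2; lra.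
have Hu := HU (L2 R N) (ltac:(rewrite /U' in hL2; lra)).
have Gam := @Gamma_le R A gam N A0 hu eps delta e0 d0 N0 Hu.
have fp0 := @fp_ge0' R A gam N A0 hu.
have hB := @XB_le R A gam N fp0 eps N0.
have hA := @XA_ge R A gam N fp0.
have Y0 := Ysum_ge0 R A gam N.
rewrite /calB /calA.
set S := sum_f2 A gam N.
have S0 : 0 <= S^-1.
  by rewrite invr_ge0 /S /sum_f2; apply: sumr_ge0 => n _; apply: sqr_ge0.
set XB := \sum_(1 <= n < (Mprod gam N).+1) _.
set XA := \sum_(1 <= n < (Mprod gam N).+1) _.
have XB0 : 0 <= XB.
  apply: sumr_ge0 => n _; apply: mulr_ge0.
    by rewrite mulr_ge0 ?mulr_ge0 ?invr_ge0 ?powR_ge0 ?h_ge0 ?f_ge0.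
  by apply: sumr_ge0 => q _; rewrite mulr_ge0 ?powR_ge0 ?f_ge0.
rewrite ger0_norm ?mulr_ge0 //.
have hXB : XB <= delta * XA.
  apply: le_trans hB _.
  apply: (@le_trans _ _ (Ysum R A gam N * delta)); first nra.
  rewrite mulrC; apply: ler_wpM2l; [exact: ltW | exact: hA].
rewrite mulrCA; nra.
Qed.
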